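(* Let $T$ be a commutative ring with identity, $S$ a unital subring of $T$ and $I$ a non-zero nil ideal of $T$ such that $T=S+I$ and $S\cap I=\{0\}$. The following are equivalent: (1) $T$ is semi-complemented; (2) $T$ has Property $D$; (3) $S$ has Property $D$ and $I$ is a torsion-free $S$-module.
   Context: All rings are commutative with identity $\neq 0$. $\mathfrak{N}(R)$ is the nilradical and $\mathrm{reg}(R)$ the set of regular elements (non-zero-divisors) of $R$. An element $a$ is complemented if there is $b$ with $ab=0$ and $a+b\in\mathrm{reg}(R)$. $R$ is semi-complemented if every element of $R\setminus\mathfrak{N}(R)$ is complemented. $R$ has Property $D$ if $R\setminus\mathfrak{N}(R)=\mathrm{reg}(R)$. An ideal is nil if it consists of nilpotent elements. An $S$-module $M$ is torsion-free if $rm=0$ with $r\in\mathrm{reg}(S)$, $m\in M$ implies $m=0$. *)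

(* Defs.v *)
From HB Require Import structures.
From mathcomp Require Import all_boot all_algebra.
Set Implicit Arguments. Unset Strict Implicit. Unset Printing Implicit Defensive.
Import GRing.Theory.
Local Open Scope ring_scope.

Definition nilpotent_el (R : comNzRingType) (x : R) : Prop :=
  exists n : nat, x ^+ n = 0.

Definition regular_el (R : comNzRingType) (x : R) : Prop :=
  forall y : R, x * y = 0 -> y = 0.

Definition complemented (R : comNzRingType) (a : R) : Prop :=
  exists b : R, a * b = 0 /\ regular_el (a + b).

Definition semi_complemented (R : comNzRingType) : Prop :=
  forall a : R, ~ nilpotent_el a -> complemented a.

Definition propertyD (R : comNzRingType) : Prop :=
  forall a : R, ~ nilpotent_el a <-> regular_el a.

Definition is_ideal (R : comNzRingType) (I : {pred R}) : Prop :=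
  [/\ 0 \in I,
      (forall x y, x \in I -> y \in I -> x + y \in I),
      (forall x, x \in I -> - x \in I) &
      (forall r x, x \in I -> r * x \in I)].

Definition nil_ideal (R : comNzRingType) (I : {pred R}) : Prop :=
  is_ideal I /\ (forall x, x \in I -> nilpotent_el x).

(* I, viewed as an S-module via f : S -> T, is torsion-free *)
Definition torsion_free_via (S T : comNzRingType) (f : S -> T) (I : {pred T}) : Prop :=
  forall (r : S) (m : T), regular_el r -> m \in I -> f r * m = 0 -> m = 0.

(* Main.v *)
Require Import Defs.
From HB Require Import structures.
From mathcomp Require Import all_boot all_algebra.
From mathcomp Require Import ring.
From Stdlib Require Import Classical_Prop.
Import GRing.Theory.
Local Open Scope ring_scope.
Set Implicit Arguments. Unset Strict Implicit.

Lemma reg_nonnil (R : comNzRingType) (x : R) : regular_el x -> ~ nilpotent_el x.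
Proof.
move=> rx [n]; elim: n => [|n IH].
  by rewrite expr0 => h; move: (oner_neq0 R); rewrite h eqxx.
by move=> h; apply: IH; apply: rx; rewrite -exprS.
Qed.

Lemma reg_mul (R : comNzRingType) (x y : R) :
  regular_el x -> regular_el y -> regular_el (x * y).
Proof. by move=> rx ry z; rewrite -mulrA => /rx /ry. Qed.

Lemma reg_exp (R : comNzRingType) (x : R) k : regular_el x -> regular_el (x ^+ k).
Proof.
move=> rx; elim: k => [|k IH]; first by move=> y; rewrite expr0 mul1r.
by rewrite exprS; apply: reg_mul.
Qed.

Lemma powshift (R : comNzRingType) (u n y : R) :
  (u + n) * y = 0 -> forall m, u ^+ m * y = (- n) ^+ m * y.
Proof.
move=> h.
have huy : u * y = - n * y.
  by rewrite mulNr; apply/eqP; rewrite -subr_eq0 opprK -mulrDl h.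
elim=> [|m IH]; first by rewrite !expr0.
rewrite !exprS -!mulrA -IH mulrCA huy; ring.
Qed.

Lemma reg_add_nil (R : comNzRingType) (u n : R) :
  regular_el u -> nilpotent_el n -> regular_el (u + n).
Proof.
move=> ru [k nk] y h; apply: (@reg_exp _ _ k ru y).
by rewrite (powshift h) exprNn nk mulr0 mul0r.
Qed.

Lemma nil_pow (R : comNzRingType) (a : R) n : nilpotent_el (a ^+ n) -> nilpotent_el a.
Proof. by move=> [m h]; exists (n * m)%N; rewrite exprM. Qed.

Lemma L1 (T : comNzRingType) (I : {pred T}) : is_ideal I ->
  forall a i n, i \in I -> (a + i) ^+ n - a ^+ n \in I.
Proof.
case=> I0 ID IN IM a i n iI; elim: n => [|n IH]; first by rewrite subrr.
have -> : (a+i)^+n.+1 - a^+n.+1 = a^+n * i + (a+i)*((a+i)^+n - a^+n).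
  by rewrite !exprS; ring.
by apply: (ID); apply: (IM).
Qed.

Lemma nil_shift (T : comNzRingType) (I : {pred T}) : nil_ideal I ->
  forall a i, i \in I -> (nilpotent_el (a + i) <-> nilpotent_el a).
Proof.
move=> [[I0 ID IN IM] Inil] a i iI; have Id : is_ideal I by [].
split=> [[n h]|[n h]]; have := L1 Id a n iI.
  by rewrite h sub0r => /IN; rewrite opprK => /Inil; apply: nil_pow.
by rewrite h subr0 => /Inil; apply: nil_pow.
Qed.

Lemma key (T : comNzRingType) (I : {pred T}) : nil_ideal I ->
  forall a b x, x \in I -> a * b = 0 -> regular_el (a + b) ->
  complemented (a + b * x) -> b * x = 0.
Proof.
move=> [[I0 ID IN IM] Inil] a b x xI ab rab [d [cd rcd]].
set c := a + b * x in cd rcd *.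
set g := b * c.
have gE : g = b * (b * x) by rewrite /g /c mulrDr (mulrC b a) ab add0r.
have gI : g \in I by rewrite gE; apply: (IM); apply: (IM).
set v := (a + b) * (c + d).
have rv : regular_el v by apply: reg_mul.
have g2 : g * g = g * v.
  have e1 : c * c = c * (c + d) by rewrite [RHS]mulrDr cd addr0.
  have e2 : b * b = b * (a + b) by rewrite mulrDr (mulrC b a) ab add0r.
  rewrite /g /v; transitivity ((b * b) * (c * c)); first ring.
  rewrite e1 e2; ring.
have gk : forall k, g ^+ k.+1 = g * v ^+ k.
  elim=> [|k IH]; first by rewrite expr1 expr0 mulr1.
  by rewrite exprSr IH -mulrA (mulrC _ g) mulrA g2 -mulrA -exprS.
have g0 : g = 0.
  have [m hm] := Inil _ gI.
  apply: (@reg_exp _ _ m rv g); rewrite mulrC -gk exprS hm mulr0 //.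
have bbx : b * (b * x) = 0 by rewrite -gE.
apply: rab; rewrite mulrDl bbx addr0 mulrA ab mul0r //.
Qed.

Unset Implicit Arguments. Set Strict Implicit.

Theorem mainTheorem2 (T S : comNzRingType) (f : {rmorphism S -> T})
  (I : {pred T}) :
  injective f ->
  nil_ideal I ->
  (exists x : T, x \in I /\ x != 0) ->
  (forall t : T, exists (s : S) (i : T), i \in I /\ t = f s + i) ->
  (forall s : S, f s \in I -> s = 0) ->
  [/\ (semi_complemented T <-> propertyD T),
      (propertyD T <-> (propertyD S /\ torsion_free_via f I)) &
      (semi_complemented T <-> (propertyD S /\ torsion_free_via f I))].
Proof.
move=> finj Inl [x0 [x0I x0n]] dec SI.
have Inl' := Inl; move: Inl' => [[I0 ID IN IM] Inil].
have AB : semi_complemented T <-> propertyD T.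
  split=> [sc a|D a na]; last first.
    exists 0; split; first by rewrite mulr0.
    by rewrite addr0; apply/D.
  split=> [na|]; last exact: reg_nonnil.
  have [b [ab rab]] := sc a na.
  case: (classic (nilpotent_el b)) => [[n nb]|nb].
    have -> : a = (a + b) + - b by rewrite addrK.
    apply: reg_add_nil => //; exists n; by rewrite exprNn nb mulr0.
  exfalso.
  have ba : b * a = 0 by rewrite mulrC.
  have rba : regular_el (b + a) by rewrite addrC.
  case: (eqVneq (b * x0) 0) => hbx; last first.
    move/eqP: hbx; apply; apply: (key Inl x0I ab rab); apply: sc.
    by rewrite (nil_shift Inl) //; apply: (IM).
  case: (eqVneq (a * x0) 0) => hax.
    move/eqP: x0n; apply; apply: rab; by rewrite mulrDl hax hbx addr0.
  move/eqP: hax; apply; apply: (key Inl x0I ba rba); apply: sc.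
  by rewrite (nil_shift Inl) //; apply: (IM).
have fnil : forall s, nilpotent_el (f s) -> nilpotent_el s.
  move=> s [n h]; exists n; apply: finj; by rewrite rmorphXn h rmorph0.
have fnil' : forall s, nilpotent_el s -> nilpotent_el (f s).
  move=> s [n h]; exists n; by rewrite -rmorphXn h rmorph0.
have BC : propertyD T <-> (propertyD S /\ torsion_free_via f I).
  split=> [D|[DS TF]].
    have freg : forall s, ~ nilpotent_el s -> regular_el (f s).
      by move=> s ns; apply/D => /fnil.
    split.
      move=> s; split; last exact: reg_nonnil.
      move=> ns y sy; apply: finj; rewrite rmorph0; apply: (freg s ns).
      by rewrite -rmorphM sy rmorph0.
    move=> r m rr mI h; apply: (freg r) => //; exact: reg_nonnil.
  move=> t; split; last exact: reg_nonnil.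
  move=> nt; have [s [i [iI tE]]] := dec t; rewrite tE in nt *.
  have ns : ~ nilpotent_el s.
    move=> /fnil' hs; apply: nt; by rewrite (nil_shift Inl).
  have rs : regular_el s by apply/DS.
  move=> y ty; have [s' [j [jI yE]]] := dec y.
  have e : f s * f s' + (f s * j + i * (f s' + j)) = 0.
    rewrite -ty yE; ring.
  move/eqP: e; rewrite addr_eq0 -rmorphM => /eqP e.
  have ss' : s * s' = 0.
    apply: (SI); rewrite e; apply: (IN); apply: (ID); first by apply: (IM).
    by rewrite mulrC; apply: (IM).
  have s'0 : s' = 0 by apply: rs.
  move: ty; rewrite yE s'0 rmorph0 add0r => ty.
  have [k ik] := Inil _ iI.
  apply: (TF (s ^+ k)) => //; first exact: reg_exp.
  by rewrite rmorphXn (powshift ty) exprNn ik mulr0 mul0r.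
split => //; by rewrite AB.
Qed.
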